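(* For each natural number $n\ge 1$: (i) the total domination polynomial of the $n$-book graph $B_n$ is unimodal; (ii) the total domination polynomial of the generalized friendship graph $F_{n,4}$ is unimodal.
   Context: The $n$-book graph $B_n$ is obtained by taking $n$ copies of the cycle $C_4$ that all share one common edge $\{u,v\}$. The generalized friendship graph $F_{n,q}$ consists of $n$ cycles of length $q$ sharing exactly one common vertex; $F_{n,4}$ is the case $q=4$. For a finite simple graph $G=(V,E)$, a set $D\subseteq V$ is a total dominating set if every vertex of $V$ is adjacent to some vertex of $D$; $d_t(G,i)$ is the number of total dominating sets of size $i$, and $D_t(G,x)=\sum_{i} d_t(G,i)x^i$. A polynomial $\sum a_ix^i$ is unimodal if $a_0\le\dots\le a_k\ge a_{k+1}\ge\dots\ge a_N$ for some $k$. *)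

(* Defs.v *)
From mathcomp Require Import all_boot all_order all_algebra.
Set Implicit Arguments. Unset Strict Implicit. Unset Printing Implicit Defensive.
Import GRing.Theory Num.Theory.
Local Open Scope ring_scope.

(* A finite simple graph is a symmetric irreflexive boolean relation on a finType. *)

Definition total_dominating (T : finType) (e : rel T) (D : {set T}) : bool :=
  [forall x : T, [exists y in D, e x y]].

Definition dt (T : finType) (e : rel T) (i : nat) : nat :=
  #|[set D : {set T} | total_dominating e D & #|D| == i]|.

Definition Dt (T : finType) (e : rel T) : {poly int} :=
  \sum_(i < #|T|.+1) ((dt e i)%:R) *: 'X^i.

Definition unimodal (p : {poly int}) : Prop :=
  exists k : nat,
    (forall i : nat, (i < k)%N -> p`_i <= p`_i.+1) /\
    (forall i : nat, (k <= i)%N -> (i.+1 < size p)%N -> p`_i.+1 <= p`_i).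

(* ---------- The n-book graph B_n ----------
   Vertices: inl 0 = u, inl 1 = v, inr (j,false) = x_j, inr (j,true) = y_j.
   The j-th 4-cycle is u - v - y_j - x_j - u, all sharing the edge {u,v}. *)
Definition book_vertex (n : nat) := ('I_2 + ('I_n * bool))%type.

Definition book_adj0 (n : nat) (a b : book_vertex n) : bool :=
  match a, b with
  | inl i, inl i' => (val i == 0%N) && (val i' == 1%N)
  | inl i, inr (j, s) => if val i == 0%N then ~~ s else s        (* u ~ x_j, v ~ y_j *)
  | inr (j, s), inr (j', s') => (j == j') && ~~ s && s'
  | _, _ => false
  end.

Definition book_adj (n : nat) : rel (book_vertex n) :=
  fun a b => book_adj0 a b || book_adj0 b a.

(* ---------- The generalized friendship graph F_{n,4} ----------
   Vertices: None = centre c, Some (j,t) for t in {0,1,2}.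
   The j-th 4-cycle is c - (j,0) - (j,1) - (j,2) - c. *)
Definition friend_vertex (n : nat) := option ('I_n * 'I_3).

Definition friend_adj0 (n : nat) (a b : friend_vertex n) : bool :=
  match a, b with
  | None, Some (_, t) => (val t == 0%N) || (val t == 2%N)
  | Some (j, t), Some (j', t') => (j == j') && (val t'== (val t).+1)
  | _, _ => false
  end.

Definition friend_adj (n : nat) : rel (friend_vertex n) :=
  fun a b => friend_adj0 a b || friend_adj0 b a.

(* Main.v *)
Require Import Defs.
From mathcomp Require Import all_boot all_order all_algebra.
From mathcomp Require Import zify ring lra.
Set Implicit Arguments. Unset Strict Implicit. Unset Printing Implicit Defensive.
Import Order.TTheory GRing.Theory Num.Theory.

Section Part1.
Local Open Scope ring_scope.

Definition LCP (p : {poly int}) :=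
  [/\ forall k, 0 <= p`_k,
      forall k, p`_k * p`_k.+2 <= p`_k.+1 ^+ 2 &
      forall i j l, (i <= j)%N -> (j <= l)%N -> 0 < p`_i -> 0 < p`_l -> 0 < p`_j].

Lemma SU_unimodal (p : {poly int}) (m : nat) :
  (forall i, (i < m)%N -> p`_i <= p`_i.+1) ->
  (forall i, (m <= i)%N -> p`_i.+1 <= p`_i) -> unimodal p.
Proof. move=> H1 H2; exists m; split=> // i Hi _; exact: H2. Qed.

Lemma LCP_unimodal p : LCP p -> unimodal p.
Proof.
case=> H0 Hlc Hnz.
have [->|pn0] := eqVneq p 0.
  by exists 0%N; split=> i; rewrite !coef0.
have ex : exists i, p`_i.+1 < p`_i.
  exists (size p).-1; rewrite prednK ?size_poly_gt0 //.
  rewrite nth_default // lt_def; apply/andP; split; last exact: H0.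
  have := lead_coef_eq0 p; rewrite /lead_coef => ->; exact: pn0.
pose m := ex_minn ex.
have mP : p`_m.+1 < p`_m by rewrite /m; case: ex_minnP.
have mmin : forall i, p`_i.+1 < p`_i -> (m <= i)%N.
  by rewrite /m; case: ex_minnP=> k _ Hk i Hi; apply: Hk.
apply: (SU_unimodal (m := m)).
  move=> i Hi; rewrite leNgt; apply/negP=> /mmin; by rewrite leqNgt Hi.
move=> i; move/subnKC=> <-; elim: (i - m)%N => [|d IH].
  by rewrite addn0 ltW.
rewrite addnS.
set x := p`_(m + d); set y := p`_(m+d).+1; set z := p`_(m+d).+2.
have hz : 0 <= z := H0 _.
have hy : 0 <= y := H0 _.
have hlc : x * z <= y ^+ 2 := Hlc _.
have [ypos|] := ltP 0 y.
  have hxy : y <= x by [].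
  have : y * z <= x * z by apply: ler_wpM2r.
  move=> h2; rewrite -(ler_pM2l ypos); rewrite expr2 in hlc; apply: le_trans h2 hlc.
rewrite le_eqVlt ltNge hy orbF => /eqP y0.
rewrite y0; rewrite leNgt; apply/negP=> zpos.
have pm : 0 < p`_m by apply: le_lt_trans mP; exact: H0.
have := Hnz m (m+d).+1 (m+d).+2 _ _ pm zpos.
rewrite -/y y0 ltxx; move=> h; have : false by apply: h; lia. done.

Qed.

End Part1.

Section Part2.
Local Open Scope ring_scope.

Definition shc (p : {poly int}) (k : nat) : int :=
  if k is k'.+1 then p`_k' else 0.

Lemma coef_lin (a : int) p k :
  (('X + a%:P) * p)`_k = shc p k + a * p`_k.
Proof. by rewrite mulrDl coefD coefXM coefCM; case: k. Qed.

Lemma LCP_lin (a : int) p : 0 <= a -> LCP p -> LCP (('X + a%:P) * p).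
Proof.
move=> ha [H0 Hlc Hnz].
have Hsh0 : forall k, 0 <= shc p k by case.
have H3 : forall k, shc p k * p`_k.+2 <= p`_k * p`_k.+1.
  case=> [|k] /=; first by rewrite mul0r; apply: mulr_ge0.
  have h1 := Hlc k; have h2 := Hlc k.+1.
  have w0 := H0 k; have x0 := H0 k.+1; have y0 := H0 k.+2; have z0 := H0 k.+3.
  have [xp|] := ltP 0 p`_k.+1; last first.
    rewrite le_eqVlt ltNge x0 orbF => /eqP e; rewrite e mul0r.
    have [wp|] := ltP 0 p`_k; last first.
      by rewrite le_eqVlt ltNge w0 orbF => /eqP ->; rewrite mul0r.
    have [zp|] := ltP 0 p`_k.+3; last first.
      by rewrite le_eqVlt ltNge z0 orbF => /eqP ->; rewrite mulr0.
    have := Hnz k k.+1 k.+3 ltac:(lia) ltac:(lia) wp zp; by rewrite e ltxx.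
  have [yp|] := ltP 0 p`_k.+2; last first.
    rewrite le_eqVlt ltNge y0 orbF => /eqP e; rewrite e mulr0.
    have [wp|] := ltP 0 p`_k; last first.
      by rewrite le_eqVlt ltNge w0 orbF => /eqP ->; rewrite mul0r.
    have [zp|] := ltP 0 p`_k.+3; last first.
      by rewrite le_eqVlt ltNge z0 orbF => /eqP ->; rewrite mulr0.
    have := Hnz k k.+2 k.+3 ltac:(lia) ltac:(lia) wp zp; by rewrite e ltxx.
  have hp : 0 < p`_k.+1 * p`_k.+2 by apply: mulr_gt0.
  rewrite -(ler_pM2r hp).
  have := ler_pM (mulr_ge0 w0 y0) (mulr_ge0 x0 z0) h1 h2; rewrite !expr2.
  move=> h; lra.
split.
- move=> k; rewrite coef_lin; apply: addr_ge0 => //; exact: mulr_ge0.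
- move=> k; rewrite !coef_lin.
  have h1 := Hlc k; have h3 := H3 k.
  have h2 : shc p k * p`_k.+1 <= p`_k ^+ 2.
    case: k {h1 h3} => [|k] /=; first by rewrite mul0r sqr_ge0.
    exact: Hlc.
  rewrite /= in h1 h2 h3 *.
  have e1 : a * (shc p k * p`_k.+2) <= a * (p`_k * p`_k.+1) by apply: ler_wpM2l.
  have e2 : a ^+ 2 * (p`_k * p`_k.+2) <= a ^+ 2 * (p`_k.+1 ^+ 2).
    by apply: ler_wpM2l => //; apply: sqr_ge0.
  have -> : (p`_k + a * p`_k.+1) ^+ 2 =
     p`_k ^+ 2 + a * (p`_k * p`_k.+1) + a * (p`_k * p`_k.+1) + a ^+ 2 * (p`_k.+1 ^+ 2) by ring.
  have -> : (shc p k + a * p`_k) * (p`_k.+1 + a * p`_k.+2) =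
     shc p k * p`_k.+1 + a * (shc p k * p`_k.+2) + a * (p`_k * p`_k.+1) + a ^+ 2 * (p`_k * p`_k.+2) by ring.
  by lra.
- move=> i j l hij hjl; rewrite !coef_lin.
  have [ap|] := ltP 0 a; last first.
    rewrite le_eqVlt ltNge ha orbF => /eqP ->; rewrite !mul0r !addr0.
    case: i hij => [|i] hij; first by rewrite ltxx.
    case: j hij hjl => [|j] // hij hjl.
    case: l hjl => [|l] // hjl /=.
    exact: Hnz.
  move=> ti tl.
  have [p0 [hp0 [hp1 hp2]]] : exists p0, [/\ (p0 <= i)%N, (i <= p0.+1)%N & 0 < p`_p0].
    move: ti; case: i hij => [|i] hij /=.
      rewrite add0r => h; exists 0%N; split=> //; by rewrite -(pmulr_rgt0 _ ap).
    have [pi|] := ltP 0 p`_i.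
      by move=> _; exists i; split=> //; lia.
    rewrite le_eqVlt ltNge H0 orbF => /eqP ->; rewrite add0r => h.
    exists i.+1; split=> //; by rewrite -(pmulr_rgt0 _ ap).
  have [q0 [hq0 [hq1 hq2]]] : exists q0, [/\ (q0 <= l)%N, (l <= q0.+1)%N & 0 < p`_q0].
    move: tl; case: l hjl => [|l] hjl /=.
      rewrite add0r => h; exists 0%N; split=> //; by rewrite -(pmulr_rgt0 _ ap).
    have [pi|] := ltP 0 p`_l.
      by move=> _; exists l; split=> //; lia.
    rewrite le_eqVlt ltNge H0 orbF => /eqP ->; rewrite add0r => h.
    exists l.+1; split=> //; by rewrite -(pmulr_rgt0 _ ap).
  have [jq|qj] := leqP j q0.
    have pj : 0 < p`_j by apply: (Hnz p0 j q0) => //; lia.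
    apply: lt_le_trans (_ : a * p`_j <= _); first exact: mulr_gt0.
    by rewrite lerDr.
  have -> : j = l by lia.
  done.
Qed.

Lemma LCP_pow (a : int) k p : 0 <= a -> LCP p -> LCP (('X + a%:P) ^+ k * p).
Proof.
move=> ha hp; elim: k => [|k IH]; first by rewrite expr0 mul1r.
by rewrite exprS -mulrA; apply: LCP_lin.
Qed.

Lemma LCP1 : LCP 1.
Proof.
split=> [k|k|i j l hij hjl]; rewrite ?coef1.
- by case: (k == 0)%N.
- by case: k.
- case: l hjl => [|l] hjl; last by rewrite /= ltxx.
  by have -> : j = 0%N by lia.
Qed.


End Part2.

Section Part3.
Local Open Scope ring_scope.

Definition Bp (n : nat) : {poly int} := ('X + 1%:P) ^+ n.

Lemma coefBp n k : (Bp n)`_k = ('C(n, k))%:R.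
Proof.
elim: n k => [|n IH] k.
  by rewrite /Bp expr0 coef1 bin0n.
rewrite /Bp exprS coef_lin -/(Bp n) mul1r IH.
case: k => [|k] /=; first by rewrite add0r !bin0.
by rewrite IH binS natrD addrC.
Qed.

Lemma LCP_B n : LCP (Bp n).
Proof. by rewrite /Bp -(mulr1 (_ ^+ n)); apply: LCP_pow => //; exact: LCP1. Qed.

Lemma bin_lc n k : ('C(n, k) * 'C(n, k.+2) <= 'C(n, k.+1) ^ 2)%N.
Proof.
case: (LCP_B n) => _ h _; have := h k; rewrite !coefBp -natrM -natrX ler_nat.
by [].
Qed.

Definition gn (m k : nat) : nat := ('C(m.+1, k) + (k == m))%N.

Definition Gp (m : nat) : {poly int} := Bp m.+1 + 'X^m.

Lemma coefG m k : (Gp m)`_k = (gn m k)%:R.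
Proof. by rewrite /Gp coefD coefBp coefXn /gn natrD. Qed.

Lemma bin2E n : (2 * 'C(n, 2) = n * n.-1)%N.
Proof. have := mul_bin_left n 1; rewrite bin1 => ->; lia. Qed.

Lemma bin3E n : (3 * 'C(n, 3) = (n - 2) * 'C(n, 2))%N.
Proof. exact: mul_bin_left. Qed.

Lemma gn_lc m k : (gn m k * gn m k.+2 <= gn m k.+1 ^ 2)%N.
Proof.
rewrite /gn.
have [km|km] := eqVneq k m.
  rewrite -km (@bin_small k.+1 k.+2 (ltnSn _)) /=; have -> : (k.+2 == k) = false by apply/eqP; lia.
  by rewrite muln0.
have [k1m|k1m] := eqVneq k.+1 m.
  rewrite -k1m; have -> : (k.+2 == k.+1) = false by apply/eqP; lia.
  rewrite !addn0 !addn1.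
  rewrite binn muln1 binSn.
  have := bin_sub (leqnSn k.+1); rewrite subSnn.
  have := bin_sub (n := k.+2) (m := 2) isT.
  rewrite (_ : (k.+2 - 2 = k)%N); last by lia.
  move=> -> _; have := bin2E k.+2; nia.
have [k2m|k2m] := eqVneq k.+2 m.
  rewrite -k2m !addn0 addn1.
  have e2 := bin_sub (n := k.+3) (m := 2) isT.
  have e3 := bin_sub (n := k.+3) (m := 3) isT.
  rewrite (_ : (k.+3 - 2 = k.+1)%N) in e2; last by lia.
  rewrite (_ : (k.+3 - 3 = k)%N) in e3; last by lia.
  rewrite e2 e3 binSn.
  have h2 := bin2E k.+3; have h3 := bin3E k.+3.
  rewrite /= in h2 h3.
  set c2 := 'C(k.+3, 2) in h2 h3 *; set c3 := 'C(k.+3, 3) in h3 *.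
  have : (3 * (c3 * k.+4) <= 3 * c2 ^ 2)%N; last by lia.
  rewrite mulnA h3.
  have : (2 * ((k.+3 - 2) * c2 * k.+4) <= 2 * (3 * c2 ^ 2))%N; last by lia.
  have -> : (2 * ((k.+3 - 2) * c2 * k.+4) = ((k.+3 - 2) * k.+4) * (2 * c2))%N by lia.
  have -> : (2 * (3 * c2 ^ 2) = 3 * c2 * (2 * c2))%N by lia.
  apply: leq_mul => //; move: h2 => /= h2; nia.
rewrite !addn0; exact: bin_lc.
Qed.

Lemma LCP_G m : LCP (Gp m).
Proof.
split=> [k|k|i j l hij hjl]; rewrite ?coefG.
- by rewrite ler0n.
- by rewrite -natrM -natrX ler_nat gn_lc.
- rewrite !ltr0n /gn => _ hl; rewrite addn_gt0 bin_gt0; apply/orP; left.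
  move: hl; rewrite addn_gt0 bin_gt0 => /orP [h|/eqP h]; lia.
Qed.

End Part3.

Section Part4.

Definition hn (m k : nat) : nat :=
  'C(m.+1 + m.+1, k) + 2 * (if k < m then 0 else 'C(m.+1, k - m)) + (k == m + m).

Lemma hn_zero m k : m.+1 + m.+1 < k -> hn m k = 0.
Proof.
move=> hk; rewrite /hn bin_small //.
rewrite ltnNge (_ : m <= k) /=; last by lia.
rewrite bin_small; last by lia.
have -> : (k == m + m) = false by apply/eqP; lia.
by [].
Qed.

Lemma vand_term n t : 'C(n, t.+2) * 'C(n, 2) <= 'C(n + n, n + t).
Proof.
case: (leqP t.+2 n) => htn; last by rewrite bin_small.
rewrite -binomial.Vandermonde.
have ht : t.+2 < (n + t).+1 by lia.
rewrite (bigD1 (Ordinal ht)) //= .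
have -> : (n + t - t.+2 = n - 2) by lia.
rewrite bin_sub; last by lia.
exact: leq_addr.
Qed.

Lemma hn_inc m i : 0 < m -> i < m.+1 -> hn m i <= hn m i.+1.
Proof.
move=> m0 hi; rewrite /hn.
have e := mul_bin_left (m.+1 + m.+1) i.
have hC : 'C(m.+1 + m.+1, i) <= 'C(m.+1 + m.+1, i.+1).
  have : i.+1 * 'C(m.+1 + m.+1, i) <= i.+1 * 'C(m.+1 + m.+1, i.+1); last by rewrite leq_pmul2l.
  rewrite e; apply: leq_mul => //; lia.
have -> : (i == m + m) = false by apply/eqP; lia.
rewrite addn0; apply: (leq_trans _ (leq_addr _ _)); apply: leq_add => //.
case: (ltnP i m) => him; first by [].
have -> : i = m by lia.
rewrite (_ : (m.+1 < m) = false); last by apply/negbTE; rewrite -leqNgt; lia.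
by rewrite subnn subSnn bin0 bin1; lia.
Qed.

Lemma hn_dec m i : 6 < m -> m.+1 <= i -> hn m i.+1 <= hn m i.
Proof.
move=> m7 hi; rewrite /hn.
set n := m.+1.
have -> : i = n + (i - n) by lia.
set t := i - n.
rewrite (_ : (n + t < m) = false); last by apply/negbTE; rewrite -leqNgt; lia.
rewrite (_ : ((n + t).+1 < m) = false); last by apply/negbTE; rewrite -leqNgt; lia.
have -> : (n + t - m = t.+1) by lia.
have -> : ((n + t).+1 - m = t.+2) by lia.
set X := 'C(n + n, n + t).
set Y := 'C(n + n, (n + t).+1).
set Z := 'C(n, t.+2).
have E1 : (n + t).+1 * Y = (n + n - (n + t)) * X by exact: mul_bin_left.
have V : Z * 'C(n, 2) <= X by exact: vand_term.
have W2 := bin2E n.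
have hd : ((n + t).+1 == m + m) <= Z.
  case: eqP => // e; rewrite /Z bin_gt0; lia.
suff : Y + 3 * Z <= X by lia.
case: (leqP t.+2 n) => htn; last first.
  rewrite /Z bin_small // muln0 addn0.
  have : (n + t).+1 * Y <= (n + t).+1 * X; last by rewrite leq_pmul2l.
  rewrite E1; apply: leq_mul => //; lia.
have h3a : 3 * (n + t).+1 <= (t + t).+1 * 'C(n, 2).
  have : 2 * (3 * (n + t).+1) <= 2 * ((t + t).+1 * 'C(n, 2)); last by rewrite leq_pmul2l.
  have -> : 2 * ((t + t).+1 * 'C(n, 2)) = (t + t).+1 * (2 * 'C(n, 2)) by lia.
  rewrite W2 /n /=.
  set q := m.+1 * m.
  have q1 : 6 * (m + 2) <= q by rewrite /q; nia.
  have q2 : t * 6 <= t * q by rewrite leq_mul2l; apply/orP; right; lia.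
  have -> : (t + t).+1 * q = q + t * q + t * q by lia.
  lia.
have h3 : 3 * (n + t).+1 * Z <= (t + t).+1 * X.
  apply: (@leq_trans ((t + t).+1 * 'C(n, 2) * Z)); first by rewrite leq_mul2r h3a orbT.
  by rewrite -mulnA leq_mul2l (mulnC _ Z) V orbT.
have : (n + t).+1 * (Y + 3 * Z) <= (n + t).+1 * X; last by rewrite leq_pmul2l.
rewrite mulnDr E1.
have -> : n + n - (n + t) = n - t by lia.
have e2 : (n - t) * X + (t + t).+1 * X = (n + t).+1 * X by rewrite -mulnDl; congr (_ * _); lia.
lia.
Qed.

End Part4.

Section Part5.

Definition hcheck (m : nat) : bool :=
  all (fun i => (m.+1 <= i) ==> (hn m i.+1 <= hn m i)) (iota 0 15) &&
  all (fun i => (i < m.+1) ==> (hn m i <= hn m i.+1)) (iota 0 15).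

Lemma hcheck_small m : m <= 6 -> hcheck m.
Proof.
do 7 (case: m => [|m]; first by move=> _; vm_compute).
by [].
Qed.

Lemma hn_unimodal m :
  (forall i, i < m.+1 -> hn m i <= hn m i.+1) /\
  (forall i, m.+1 <= i -> hn m i.+1 <= hn m i).
Proof.
case: (leqP m 6) => hm; last first.
  split=> i hi; [apply: hn_inc => //; lia | exact: hn_dec].
have /andP [/allP hd /allP hi] := hcheck_small hm.
split=> i hi'.
  have : i \in iota 0 15 by rewrite mem_iota; lia.
  by move/hi; rewrite hi'.
case: (ltnP i 15) => h15.
  have : i \in iota 0 15 by rewrite mem_iota; lia.
  by move/hd; rewrite hi'.
by rewrite !hn_zero //; lia.
Qed.

End Part5.

Section Part6.
Local Open Scope ring_scope.

Lemma Dt_gf (T : finType) (e : rel T) :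
  Dt e = \sum_(D : {set T} | total_dominating e D) 'X^#|D|.
Proof.
rewrite /Dt (partition_big (fun D : {set T} => inord #|D| : 'I_#|T|.+1) predT) //=.
apply: eq_bigr => j _.
rewrite scaler_nat /dt.
rewrite (eq_bigr (fun _ => 'X^j)); last first.
  move=> D /andP [_ /eqP <-]; rewrite inordK // ltnS; exact: max_card.
rewrite sumr_const cardsE; congr (_ *+ _).
apply: eq_card => D; change (total_dominating e D && (#|D| == j) = total_dominating e D && (inord #|D| == j)); congr (_ && _).
have hD : (#|D| < #|T|.+1)%N by rewrite ltnS; exact: max_card.
apply/eqP/eqP => [h|<-]; last by rewrite inordK.
by apply: val_inj; rewrite /= inordK.
Qed.

Definition wb (b : bool) : {poly int} := if b then 'X else 1.

Lemma Xcard (T : finType) (A : {set T}) : 'X^#|A| = \prod_(x : T) wb (x \in A).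
Proof.
rewrite -prodr_const big_mkcond /=; apply: eq_bigr => x _.
by rewrite /wb; case: (x \in A).
Qed.

Lemma sum_ffun_forall (I J : finType) (P : pred J) (W : J -> {poly int}) (c : {poly int}) :
  \sum_(f : {ffun I -> J}) (if [forall i, P (f i)] then c * \prod_i W (f i) else 0)
  = c * (\sum_(s | P s) W s) ^+ #|I|.
Proof.
have -> : (\sum_(s | P s) W s) ^+ #|I| = \prod_(i : I) \sum_(s : J) (if P s then W s else 0).
  by rewrite prodr_const big_mkcond.
rewrite bigA_distr_bigA mulr_sumr; apply: eq_bigr => f _.
case: forallP => [H|H].
  by congr (_ * _); apply: eq_bigr => i _; rewrite H.
have [i Hi] : exists i, ~~ P (f i).
  apply/existsP; rewrite -negb_forall; apply/negP => /forallP; exact: H.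
by rewrite (bigD1 i) //= (negbTE Hi) mul0r mulr0.
Qed.

End Part6.

Section Part7.

Definition bval n (z : (bool * bool) * {ffun 'I_n -> bool * bool}) (v : book_vertex n) : bool :=
  match v with
  | inl i => if val i == 0 then z.1.1 else z.1.2
  | inr (j, s) => if s then (z.2 j).2 else (z.2 j).1
  end.

Definition bpsi n z : {set book_vertex n} := [set v | bval z v].

Definition bcond n (z : (bool * bool) * {ffun 'I_n -> bool * bool}) : bool :=
  [&& z.1.2 || [exists j, (z.2 j).1], z.1.1 || [exists j, (z.2 j).2] &
      [forall j, (z.1.1 || (z.2 j).2) && (z.1.2 || (z.2 j).1)]].

Definition bu n : book_vertex n := inl (@Ordinal 2 0 isT).
Definition bv n : book_vertex n := inl (@Ordinal 2 1 isT).

Lemma book_tds n z : total_dominating (@book_adj n) (bpsi z) = bcond z.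
Proof.
case: z => [[a b] f].
rewrite /total_dominating /bcond /=.
apply/idP/idP.
- move/forallP => H.
  have Hu := H (bu n); have Hv := H (bv n).
  move/existsP: Hu => [y /andP [yin hy]].
  move/existsP: Hv => [y' /andP [yin' hy']].
  rewrite /bpsi !inE in yin yin'.
  apply/and3P; split.
  + case: y yin hy => [[[|[|k]] hk]|[j [|]]] yi hq; rewrite /book_adj /= ?andbT ?andbF ?orbF ?andFb ?orFb in hq yi; try done; try (by move: hq).
    * by rewrite yi.
    * by apply/orP; right; apply/existsP; exists j.
  + case: y' yin' hy' => [[[|[|k]] hk]|[j [|]]] yi hq; rewrite /book_adj /= ?andbT ?andbF ?orbF ?andFb ?orFb in hq yi; try done; try (by move: hq).
    * by rewrite yi.
    * by apply/orP; right; apply/existsP; exists j.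
  + apply/forallP => j; apply/andP; split.
    * move/existsP: (H (inr (j, false))) => [w /andP [win hw]].
      rewrite /bpsi !inE in win.
      case: w win hw => [[[|[|k]] hk]|[j2 [|]]] yi hq; rewrite /book_adj /= ?andbT ?andbF ?orbF ?andFb ?orFb in hq yi; try done; try (by move: hq);
        try (by rewrite yi);
        by move: hq; rewrite ?andbT ?andbF ?orbF => /eqP ->; rewrite yi orbT.
    * move/existsP: (H (inr (j, true))) => [w /andP [win hw]].
      rewrite /bpsi !inE in win.
      case: w win hw => [[[|[|k]] hk]|[j2 [|]]] yi hq; rewrite /book_adj /= ?andbT ?andbF ?orbF ?andFb ?orFb in hq yi; try done; try (by move: hq);
        try (by rewrite yi);
        by move: hq; rewrite ?andbT ?andbF ?orbF => /eqP <-; rewrite yi orbT.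
- case/and3P => H1 H2 /forallP H3.
  apply/forallP => x; apply/existsP.
  case: x => [[[|[|k]] hk]|[j [|]]] //.
  + case/orP: H1 => [hb|/existsP [j hj]].
    * by exists (bv n); rewrite /bpsi !inE /= hb.
    * by exists (inr (j, false)); rewrite /bpsi !inE /= hj.
  + case/orP: H2 => [ha|/existsP [j hj]].
    * by exists (bu n); rewrite /bpsi !inE /= ha.
    * by exists (inr (j, true)); rewrite /bpsi !inE /= hj.
  + case/andP: (H3 j) => _ /orP [hb|hj].
    * by exists (bv n); rewrite /bpsi !inE /= hb.
    * by exists (inr (j, false)); rewrite /bpsi !inE /= hj /book_adj /= eqxx ?orbT.
  + case/andP: (H3 j) => /orP [ha|hj] _.
    * by exists (bu n); rewrite /bpsi !inE /= ha.
    * by exists (inr (j, true)); rewrite /bpsi !inE /= hj /book_adj /= eqxx ?orbT.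
Qed.

End Part7.

Section Part8.

Lemma bcond_simp n (hn : 0 < n) z :
  @bcond n z = [forall j, (z.1.1 || (z.2 j).2) && (z.1.2 || (z.2 j).1)].
Proof.
rewrite /bcond; apply/idP/idP; first by case/and3P.
move=> /forallP H; rewrite (introT forallP H) andbT.
have /andP [h1 h2] := H (Ordinal hn).
apply/andP; split.
  by case/orP: h2 => [->//|hj]; apply/orP; right; apply/existsP; exists (Ordinal hn).
by case/orP: h1 => [->//|hj]; apply/orP; right; apply/existsP; exists (Ordinal hn).
Qed.

Definition bphi n (D : {set book_vertex n}) : (bool * bool) * {ffun 'I_n -> bool * bool} :=
  ((bu n \in D, bv n \in D), [ffun j => (inr (j, false) \in D, inr (j, true) \in D)]).

Lemma bpsiK n : cancel (@bpsi n) (@bphi n).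
Proof.
case=> [[a b] f]; rewrite /bphi /bpsi !inE /=; congr (_, _).
by apply/ffunP => j; rewrite ffunE !inE /=; case: (f j).
Qed.

Lemma bphiK n : cancel (@bphi n) (@bpsi n).
Proof.
move=> D; apply/setP => v; rewrite /bpsi inE.
case: v => [[[|[|k]] hk]|[j [|]]] //=; rewrite ?ffunE //=;
  by rewrite /bu /bv (bool_irrelevance hk isT).
Qed.

Local Open Scope ring_scope.

Lemma bweight n z : 'X^#|@bpsi n z| =
  wb z.1.1 * wb z.1.2 * \prod_(j : 'I_n) (wb (z.2 j).2 * wb (z.2 j).1).
Proof.
rewrite Xcard big_sumType /= !big_ord_recl big_ord0 mulr1.
rewrite (eq_bigr (fun p : 'I_n * bool =>
   (fun j s => wb (inr (j, s) \in @bpsi n z)) p.1 p.2)); last by case.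
rewrite -(pair_bigA _ (fun j s => wb (inr (j, s) \in @bpsi n z))) /=; congr (_ * _).
  by rewrite /bpsi !inE /=.
apply: eq_bigr => j _; rewrite big_bool /bpsi !inE /=.
by [].
Qed.

Lemma book_gf n (hn : (0 < n)%N) :
  \sum_(D : {set book_vertex n} | total_dominating (@book_adj n) D) 'X^#|D| =
  \sum_(ab : bool * bool) wb ab.1 * wb ab.2 *
     (\sum_(s : bool * bool | (ab.1 || s.2) && (ab.2 || s.1)) (wb s.2 * wb s.1)) ^+ n.
Proof.
rewrite (reindex (@bpsi n)); last first.
  by exists (@bphi n) => x _; [apply: bpsiK | apply: bphiK].
rewrite big_mkcond /=.
pose F := (fun ab (f : {ffun 'I_n -> bool * bool}) =>
   if [forall j, (ab.1 || (f j).2) && (ab.2 || (f j).1)] then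
     wb ab.1 * wb ab.2 * \prod_(j : 'I_n) (wb (f j).2 * wb (f j).1) else 0).
rewrite (eq_bigr (fun z => F z.1 z.2)); last first.
  case=> ab f _ /=; rewrite /F book_tds (bcond_simp hn) bweight //.
rewrite -(pair_bigA _ F) /=; apply: eq_bigr => ab _.
by rewrite /F (@sum_ffun_forall _ _ (fun s : bool * bool => (ab.1 || s.2) && (ab.2 || s.1)) (fun s => wb s.2 * wb s.1)) card_ord.
Qed.

End Part8.

Section Part9.

Definition ftrip := (bool * bool * bool)%type.

Definition fval n (z : bool * {ffun 'I_n -> ftrip}) (v : friend_vertex n) : bool :=
  match v with
  | None => z.1
  | Some (j, t) => if val t == 0 then (z.2 j).1.1 else if val t == 1 then (z.2 j).1.2 else (z.2 j).2
  end.

Definition fpsi n z : {set friend_vertex n} := [set v | fval z v].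

Definition fcond n (z : bool * {ffun 'I_n -> ftrip}) : bool :=
  [exists j, (z.2 j).1.1 || (z.2 j).2] &&
  [forall j, (z.1 || (z.2 j).1.2) && ((z.2 j).1.1 || (z.2 j).2)].

Lemma friend_tds n z : total_dominating (@friend_adj n) (fpsi z) = fcond z.
Proof.
case: z => [c f].
rewrite /total_dominating /fcond /=.
apply/idP/idP.
- move/forallP => H; apply/andP; split.
  + move/existsP: (H None) => [y /andP [yin hy]].
    rewrite /fpsi !inE in yin.
    case: y yin hy => [[j [[|[|[|k]]] hk]]|] yi hq; rewrite /friend_adj /= in hq yi; try done;
      by apply/existsP; exists j; rewrite yi ?orbT.
  + apply/forallP => j; apply/andP; split.
    * move/existsP: (H (Some (j, @Ordinal 3 0 isT))) => [y /andP [yin hy]].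
      rewrite /fpsi !inE in yin.
      case: y yin hy => [[j2 [[|[|[|k]]] hk]]|] yi hq; rewrite /friend_adj /= ?andbT ?andbF ?orbF ?andFb ?orFb in hq yi; try done; try (by move: hq);
        try (by rewrite yi);
        by move: hq => /eqP e; subst; rewrite yi ?orbT.
    * move/existsP: (H (Some (j, @Ordinal 3 1 isT))) => [y /andP [yin hy]].
      rewrite /fpsi !inE in yin.
      case: y yin hy => [[j2 [[|[|[|k]]] hk]]|] yi hq; rewrite /friend_adj /= ?andbT ?andbF ?orbF ?andFb ?orFb in hq yi; try done; try (by move: hq);
        by move: hq => /eqP e; subst; rewrite yi ?orbT.
- case/andP => /existsP [j0 H0] /forallP H.
  apply/forallP => x; apply/existsP.
  case: x => [[j [[|[|[|k]]] hk]]|] //.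
  + case/andP: (H j) => /orP [hc|h1] _.
    * by exists None; rewrite /fpsi !inE /= hc.
    * by exists (Some (j, @Ordinal 3 1 isT)); rewrite /fpsi !inE /= h1 /friend_adj /= eqxx.
  + case/andP: (H j) => _ /orP [h0|h2].
    * by exists (Some (j, @Ordinal 3 0 isT)); rewrite /fpsi !inE /= h0 /friend_adj /= eqxx ?orbT.
    * by exists (Some (j, @Ordinal 3 2 isT)); rewrite /fpsi !inE /= h2 /friend_adj /= eqxx.
  + case/andP: (H j) => /orP [hc|h1] _.
    * by exists None; rewrite /fpsi !inE /= hc.
    * by exists (Some (j, @Ordinal 3 1 isT)); rewrite /fpsi !inE /= h1 /friend_adj /= eqxx ?orbT.
  + case/orP: H0 => [h0|h2].
    * by exists (Some (j0, @Ordinal 3 0 isT)); rewrite /fpsi !inE /= h0.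
    * by exists (Some (j0, @Ordinal 3 2 isT)); rewrite /fpsi !inE /= h2.
Qed.

Lemma fcond_simp n (hn : 0 < n) z :
  @fcond n z = [forall j, (z.1 || (z.2 j).1.2) && ((z.2 j).1.1 || (z.2 j).2)].
Proof.
rewrite /fcond; apply/idP/idP; first by case/andP.
move=> /forallP H; rewrite (introT forallP H) andbT.
have /andP [_ h] := H (Ordinal hn).
by apply/existsP; exists (Ordinal hn).
Qed.

Definition fphi n (D : {set friend_vertex n}) : bool * {ffun 'I_n -> ftrip} :=
  (None \in D, [ffun j => (Some (j, @Ordinal 3 0 isT) \in D, Some (j, @Ordinal 3 1 isT) \in D,
                          Some (j, @Ordinal 3 2 isT) \in D)]).

Lemma fpsiK n : cancel (@fpsi n) (@fphi n).
Proof.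
case=> [c f]; rewrite /fphi /fpsi !inE /=; congr (_, _).
by apply/ffunP => j; rewrite ffunE !inE /=; case: (f j) => [[]].
Qed.

Lemma fphiK n : cancel (@fphi n) (@fpsi n).
Proof.
move=> D; apply/setP => v; rewrite /fpsi inE.
case: v => [[j [[|[|[|k]]] hk]]|] //=; rewrite ?ffunE //=;
  by rewrite (bool_irrelevance hk isT).
Qed.

Local Open Scope ring_scope.

Lemma big_option_prod (T : finType) (F : option T -> {poly int}) :
  \prod_(x : option T) F x = F None * \prod_(y : T) F (Some y).
Proof.
rewrite (bigD1 None) //=; congr (_ * _).
rewrite (reindex_omap Some (fun x => x)) /=; last by case.
by apply: eq_bigl => y; rewrite /= eqxx.
Qed.

Lemma fweight n z : 'X^#|@fpsi n z| =
  wb z.1 * \prod_(j : 'I_n) (wb (z.2 j).1.1 * wb (z.2 j).1.2 * wb (z.2 j).2).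
Proof.
rewrite Xcard big_option_prod.
rewrite (eq_bigr (fun p : 'I_n * 'I_3 =>
   (fun j t => wb (Some (j, t) \in @fpsi n z)) p.1 p.2)); last by case.
rewrite -(pair_bigA _ (fun j t => wb (Some (j, t) \in @fpsi n z))) /=; congr (_ * _).
  by rewrite /fpsi !inE /=.
apply: eq_bigr => j _; rewrite !big_ord_recl big_ord0 mulr1 /fpsi !inE /=.
by rewrite mulrA.
Qed.

Lemma friend_gf n (hn : (0 < n)%N) :
  \sum_(D : {set friend_vertex n} | total_dominating (@friend_adj n) D) 'X^#|D| =
  \sum_(c : bool) wb c *
     (\sum_(s : ftrip | (c || s.1.2) && (s.1.1 || s.2)) (wb s.1.1 * wb s.1.2 * wb s.2)) ^+ n.
Proof.
rewrite (reindex (@fpsi n)); last first.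
  by exists (@fphi n) => x _; [apply: fpsiK | apply: fphiK].
rewrite big_mkcond /=.
pose F := (fun c (f : {ffun 'I_n -> ftrip}) =>
   if [forall j, (c || (f j).1.2) && ((f j).1.1 || (f j).2)] then
     wb c * \prod_(j : 'I_n) (wb (f j).1.1 * wb (f j).1.2 * wb (f j).2) else 0).
rewrite (eq_bigr (fun z => F z.1 z.2)); last first.
  case=> c f _ /=; rewrite /F friend_tds (fcond_simp hn) fweight //.
rewrite -(pair_bigA _ F) /=; apply: eq_bigr => c _.
by rewrite /F (@sum_ffun_forall _ _ (fun s : ftrip => (c || s.1.2) && (s.1.1 || s.2))
   (fun s => wb s.1.1 * wb s.1.2 * wb s.2)) card_ord.
Qed.

End Part9.

Section Part10.
Local Open Scope ring_scope.

Lemma sum_bb (F : bool * bool -> {poly int}) :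
  \sum_(s : bool * bool) F s = F (true, true) + F (true, false) + (F (false, true) + F (false, false)).
Proof.
rewrite (eq_bigr (fun s => (fun a b => F (a, b)) s.1 s.2)); last by case.
by rewrite -(pair_bigA _ (fun a b => F (a, b))) /= !big_bool.
Qed.

Lemma sum_bbb (F : ftrip -> {poly int}) :
  \sum_(s : ftrip) F s = \sum_(s : bool * bool) (F (s, true) + F (s, false)).
Proof.
rewrite (eq_bigr (fun s => (fun a b => F (a, b)) s.1 s.2)); last by case.
by rewrite -(pair_bigA _ (fun a b => F (a, b))) /=; apply: eq_bigr => s _; rewrite big_bool.
Qed.

Lemma book_poly m : Dt (@book_adj m.+1) = 'X^2 * Gp m ^+ 2.
Proof.
rewrite Dt_gf book_gf // sum_bb /=.
rewrite big_mkcond sum_bb /=. do 3 rewrite big_mkcond sum_bb /=.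
rewrite /wb /Gp /Bp polyC1.
set Y := 'X + 1.
rewrite !(mulr1, mul1r, addr0, add0r).
have -> : 'X * 'X + 'X + ('X + 1) = Y ^+ 2 by rewrite /Y; ring.
have -> : 'X * 'X + 'X = 'X * Y by rewrite /Y; ring.
rewrite -exprM mulnC exprM !exprMn !exprS.
set A := Y ^+ m; set B := 'X ^+ m.
ring.
Qed.

Lemma friend_poly m :
  Dt (@friend_adj m.+1) = ('X + 0%:P) ^+ m.+2 * (('X + 2%:P) ^+ m.+1 * Gp m).
Proof.
rewrite Dt_gf friend_gf // big_bool /=.
do 2 rewrite big_mkcond sum_bbb sum_bb /=.
rewrite /wb /Gp /Bp polyC1 polyC0 addr0.
rewrite !(mulr1, mul1r, addr0, add0r).
have h2 : (2%:P : {poly int}) = 1 + 1 by rewrite -polyC1 -polyCD.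
rewrite h2.
set Z := 'X + (1 + 1); set Y := 'X + 1.
have -> : 'X * 'X * 'X + 'X * 'X + ('X * 'X + 'X) + ('X * 'X + 'X) = 'X * Y * Z by rewrite /Y /Z; ring.
have -> : 'X * 'X * 'X + 'X * 'X + 'X * 'X = 'X * 'X * Z by rewrite /Z; ring.
rewrite !exprMn !exprS.
set A := Y ^+ m; set B := 'X ^+ m; set C := Z ^+ m.
ring.
Qed.

Lemma coefG2 m k : (Gp m ^+ 2)`_k = (hn m k)%:R.
Proof.
have -> : Gp m ^+ 2 = Bp (m.+1 + m.+1) + ('X^m * Bp m.+1) *+ 2 + 'X^(m + m).
  rewrite /Gp /Bp !exprD.
  set A := ('X + 1%:P) ^+ m.+1; set B := 'X ^+ m.
  ring.
rewrite !coefD !coefXnM !coefBp coefXn /hn !natrD.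
by case: (k < m)%N; rewrite ?addr0.
Qed.

Lemma book_unimodal m : unimodal ('X^2 * Gp m ^+ 2).
Proof.
have [Hi Hd] := hn_unimodal m.
apply: (SU_unimodal (m := m.+3)) => i hi; rewrite !coefXnM !coefG2.
- case: (ltnP i 2) => h2.
    by case: i h2 hi => [|[|i]].
  rewrite ltnNge (leqW h2) /= ler_nat.
  have -> : (i.+1 - 2 = (i - 2).+1)%N by lia.
  apply: Hi; lia.
- have f1 : (i < 2)%N = false by apply/negbTE; rewrite -leqNgt; lia.
  have f2 : (i.+1 < 2)%N = false by apply/negbTE; rewrite -leqNgt; lia.
  rewrite f1 f2 ler_nat.
  have -> : (i.+1 - 2 = (i - 2).+1)%N by lia.
  apply: Hd; lia.
Qed.


End Part10.

Theorem mainTheorem10 (n : nat) (hn : (1 <= n)%N) :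
  unimodal (Dt (@book_adj n)) /\ unimodal (Dt (@friend_adj n)).
Proof.
case: n hn => [//|m] _; split.
- rewrite book_poly; exact: book_unimodal.
- rewrite friend_poly; apply: LCP_unimodal; apply: LCP_pow => //.
  by apply: LCP_pow => //; exact: LCP_G.
Qed.
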